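(* Let $C=L_1;\ldots;L_d$ be a sorting network on $n$ channels of depth $d\ge2$ whose last layer is in last layer normal form. Let $i<j$ be two channels that are both unused in layer $L_{d-1}$ and that belong to different blocks of $C$. Then the network obtained from $C$ by adding the comparator $(i,j)$ to layer $L_{d-1}$ is still a sorting network.
   Context: Channels are numbered $1,\ldots,n$. A comparator network of depth $d$ is a sequence $C=L_1;\ldots;L_d$ of layers; each layer is a set of comparators $(i,j)$ with $1\le i<j\le n$, each channel occurring in at most one comparator of a layer. An input $\bar x\in\{0,1\}^n$ propagates: $\bar x_0=\bar x$, and $\bar x_k$ is obtained from $\bar x_{k-1}$ by, for each $(i,j)\in L_k$, putting the minimum of the values at positions $i,j$ at position $i$ and the maximum at position $j$. The output is $C(\bar x)=\bar x_d$; $C$ is a sorting network if $C(\bar x)$ is sorted non-decreasingly for all $\bar x\in\{0,1\}^n$. A channel is used in a layer if it occurs in some comparator of that layer. The last layer $L_d$ is in last layer normal form if every comparator of $L_d$ is of the form $(i,i+1)$ and there is no $i<n$ with both $i$ and $i+1$ unused in $L_d$. The blocks of $C$ are the vertex sets of the connected components of the graph on $\{1,\ldots,n\}$ with an edge $\{i,j\}$ for each comparator $(i,j)\in L_d$. *)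

(* Defs.v *)
(* Channels are 'I_n (0-based: channel k here is channel k+1 of the paper). *)
From mathcomp Require Import all_boot.
Set Implicit Arguments. Unset Strict Implicit. Unset Printing Implicit Defensive.

(* A comparator (i,j) on n channels; validity i < j is imposed by valid_layer. *)
Definition comparator (n : nat) := ('I_n * 'I_n)%type.
Definition layer (n : nat) := seq (comparator n).
Definition network (n : nat) := seq (layer n).

Definition channels n (L : layer n) : seq 'I_n :=
  flatten [seq [:: c.1; c.2] | c <- L].

Definition valid_layer n (L : layer n) : bool :=
  all (fun c : comparator n => (c.1 < c.2)%N) L && uniq (channels L).

Definition valid_network n (C : network n) : bool := all (@valid_layer n) C.

(* Applying a comparator (i,j): min (= &&) goes to i, max (= ||) goes to j. *)
Definition apply_comp n (c : comparator n) (x : 'I_n -> bool) : 'I_n -> bool :=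
  fun k => if k == c.1 then x c.1 && x c.2
           else if k == c.2 then x c.1 || x c.2 else x k.

(* Since the comparators of a valid layer are disjoint, applying them one
   after the other is the same as applying them simultaneously. *)
Definition apply_layer n (L : layer n) (x : 'I_n -> bool) : 'I_n -> bool :=
  foldl (fun y c => apply_comp c y) x L.

Definition run n (C : network n) (x : 'I_n -> bool) : 'I_n -> bool :=
  foldl (fun y L => apply_layer L y) x C.

Definition sorted_out n (y : 'I_n -> bool) : Prop :=
  forall i j : 'I_n, (i <= j)%N -> (y i <= y j)%N.

Definition sorting_network n (C : network n) : Prop :=
  forall x : 'I_n -> bool, sorted_out (run C x).

Definition used n (L : layer n) (k : 'I_n) : bool := k \in channels L.

Definition llnf n (L : layer n) : bool :=
  all (fun c : comparator n => val c.2 == (val c.1).+1) L &&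
  [forall i : 'I_n, forall j : 'I_n,
     (val j == (val i).+1) ==> (used L i || used L j)].

(* edge relation of the graph of the last layer; blocks = connected components *)
Definition block_rel n (L : layer n) : rel 'I_n :=
  fun a b => ((a, b) \in L) || ((b, a) \in L).

Definition same_block n (L : layer n) (i j : 'I_n) : bool :=
  connect (block_rel L) i j.

(* Main.v *)
From Stdlib Require Import FunctionalExtensionality.
Require Import Defs.
From mathcomp Require Import all_boot.
Set Implicit Arguments. Unset Strict Implicit.

Lemma chan_cons n (d : comparator n) L : channels (d :: L) = d.1 :: d.2 :: channels L.
Proof. by []. Qed.

Lemma layer_cons n (d : comparator n) L y : apply_layer (d :: L) y = apply_layer L (apply_comp d y).
Proof. by []. Qed.

Lemma al_notin n (L : layer n) y k : k \notin channels L -> apply_layer L y k = y k.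
Proof.
elim: L y => [//|d L IH] y; rewrite chan_cons !inE negb_or => /andP[k1 /norP[k2 kL]].
rewrite layer_cons IH // /apply_comp (negbTE k1) (negbTE k2) //.
Qed.

Lemma mem_chan n (L : layer n) c : c \in L -> (c.1 \in channels L) && (c.2 \in channels L).
Proof.
elim: L => [//|d L IH]; rewrite inE chan_cons => /orP[/eqP->|/IH/andP[a b]].
  by rewrite !inE !eqxx orbT.
by rewrite !inE a b !orbT.
Qed.

Lemma chan_mem n (L : layer n) k : k \in channels L -> exists2 c, c \in L & (k == c.1) || (k == c.2).
Proof.
elim: L => [//|d L IH]; rewrite chan_cons !inE => /orP[H|/orP[H|/IH[c cL H]]].
- by exists d; rewrite ?inE ?eqxx ?H.
- by exists d; rewrite ?inE ?eqxx ?H ?orbT.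
- by exists c; rewrite ?inE ?cL ?orbT.
Qed.

Lemma al_mem n (L : layer n) y c : uniq (channels L) -> c \in L ->
  apply_layer L y c.1 = y c.1 && y c.2 /\ apply_layer L y c.2 = y c.1 || y c.2.
Proof.
elim: L y => [//|d L IH] y; rewrite layer_cons chan_cons /= !inE negb_or => /andP[/andP[d12 d1L] /andP[d2L u]].
move=> /orP[/eqP->|cL].
  have h : (d.2 == d.1) = false by rewrite eq_sym (negbTE d12).
  by rewrite !al_notin // /apply_comp eqxx h eqxx.
have [IH1 IH2] := IH (apply_comp d y) u cL.
move: (mem_chan cL) => /andP[c1 c2].
have n11 : (c.1 == d.1) = false by apply/eqP=> E; move: d1L; rewrite -E c1.
have n12 : (c.1 == d.2) = false by apply/eqP=> E; move: d2L; rewrite -E c1.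
have n21 : (c.2 == d.1) = false by apply/eqP=> E; move: d1L; rewrite -E c2.
have n22 : (c.2 == d.2) = false by apply/eqP=> E; move: d2L; rewrite -E c2.
by rewrite IH1 IH2 /apply_comp n11 n12 n21 n22.
Qed.

Lemma comp_comm n (c d : comparator n) y :
  c.1 != d.1 -> c.1 != d.2 -> c.2 != d.1 -> c.2 != d.2 ->
  apply_comp c (apply_comp d y) = apply_comp d (apply_comp c y).
Proof.
move=> /negbTE a /negbTE b /negbTE e /negbTE f; apply: functional_extensionality => k.
rewrite /apply_comp a b e f.
have a' : (d.1 == c.1) = false by rewrite eq_sym.
have b' : (d.2 == c.1) = false by rewrite eq_sym.
have e' : (d.1 == c.2) = false by rewrite eq_sym.
have f' : (d.2 == c.2) = false by rewrite eq_sym.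
case: (k =P c.1) => [->|_]; first by rewrite a b.
case: (k =P c.2) => [->|_]; first by rewrite e f.
by rewrite a' b' e' f'.
Qed.

Lemma layer_comm n (M : layer n) (c : comparator n) z :
  c.1 \notin channels M -> c.2 \notin channels M ->
  apply_layer M (apply_comp c z) = apply_comp c (apply_layer M z).
Proof.
elim: M z => [//|d M IH] z; rewrite chan_cons !inE !negb_or => /and3P[a b m1] /and3P[e f m2].
by rewrite !layer_cons -(@comp_comm _ c d z a b e f) IH.
Qed.

Lemma comp_id n (c : comparator n) y : (y c.1 ==> y c.2) -> apply_comp c y = y.
Proof.
move=> H; apply: functional_extensionality => k; rewrite /apply_comp.
case: (k =P c.1) => [->|_]; first by case: (y c.1) H => //= ->.
case: (k =P c.2) => [->|_] //; by case: (y c.1) H => //= ->.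
Qed.

Lemma decomp n (C : network n) : (2 <= size C)%N -> exists P M L, C = P ++ [:: M; L].
Proof.
case/lastP: C => [//|C L]; case/lastP: C => [//|P M] _.
by exists P, M, L; rewrite -!cats1 -catA.
Qed.

Lemma set_nth_cat T (x0 : T) P s y : set_nth x0 (P ++ s) (size P) y = P ++ set_nth x0 s 0 y.
Proof. by elim: P => [|a P IH] //=; rewrite IH. Qed.

Theorem lemma7 (n : nat) (C : network n) (i j : 'I_n) :
  valid_network C ->
  (2 <= size C)%N ->
  sorting_network C ->
  llnf (last [::] C) ->
  (i < j)%N ->
  ~~ used (nth [::] C (size C - 2)) i ->
  ~~ used (nth [::] C (size C - 2)) j ->
  ~~ same_block (last [::] C) i j ->
  sorting_network
    (set_nth [::] C (size C - 2) ((i, j) :: nth [::] C (size C - 2))).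
Proof.
move=> vC s2 sC; have [P [M [L EC]]] := decomp s2; subst C.
have sz : (size (P ++ [:: M; L]) - 2 = size P)%N by rewrite size_cat /= addnK.
rewrite sz nth_cat ltnn subnn /= last_cat /= set_nth_cat /=.
move: vC; rewrite /valid_network all_cat /= => /and3P[_ _ /andP[vL _]].
move: vL => /andP[_ uL].
move=> /andP[adj _] ij ui uj nb x.
have E : forall x, run (P ++ [:: (i, j) :: M; L]) x = run (P ++ [:: M; L]) x.
  move=> x0; rewrite /run !foldl_cat /=.
  set z := foldl _ x0 P.
  rewrite (@layer_comm _ _ (i, j)) //.
  set y := apply_layer M z.
  suff yij : y i ==> y j by rewrite comp_id.
  apply/implyP => yi; apply/negPn/negP => yj.
  have S := sC x0; rewrite /run foldl_cat /= -/z -/y in S.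
  set w := apply_layer L y in S.
  have [p [wp hp]] : exists p, w p = true /\ (val p = val i \/ (val p = (val i).+1 /\ (i, p) \in L)).
    rewrite /w; case: (boolP (i \in channels L)) => iL; last by exists i; split; [rewrite /w al_notin | left].
    have [c cL /orP[/eqP ic|/eqP ic]] := chan_mem iL.
    - exists c.2; have [_ ->] := @al_mem _ _ y _ uL cL; rewrite -ic yi /=; split=> //.
      right; move/allP: adj => /(_ c cL)/eqP ->; rewrite ic; split=> //.
      by case: c cL ic => a b /=.
    - exists i; have [_ ] := @al_mem _ _ y _ uL cL; rewrite -ic yi orbT => ->; split=> //; by left.
  have [q [wq hq]] : exists q, w q = false /\ (val q = val j \/ ((val q).+1 = val j /\ (q, j) \in L)).
    rewrite /w; case: (boolP (j \in channels L)) => jL; last by exists j; split; [rewrite /w al_notin // (negbTE yj) | left].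
    have [c cL /orP[/eqP jc|/eqP jc]] := chan_mem jL.
    - exists j; rewrite {1}jc; have [-> _] := @al_mem _ _ y _ uL cL; rewrite -jc (negbTE yj); split=> //; by left.
    - exists c.1; have [-> _] := @al_mem _ _ y _ uL cL; rewrite -jc (negbTE yj) andbF; split=> //.
      right; move/allP: adj => /(_ c cL)/eqP H; rewrite jc -H; split=> //.
      by case: c cL jc H => a b /=.
  have pq : (p <= q)%N.
    case: hp => [->|[hp1 hp2]]; case: hq => [->|[hq1 hq2]].
    - exact: ltnW.
    - by rewrite -ltnS hq1.
    - by rewrite hp1.
    - rewrite hp1 -ltnS hq1; case: ltngtP => // H.
      + have : (j < (i : nat).+1)%N by [].
        by rewrite ltnS leqNgt ij.
      + have pj : p = j by apply: val_inj; rewrite /= hp1 H.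
        by move: nb; rewrite /same_block; rewrite -pj (connect1 (e:=block_rel L) (x:=i) (y:=p)) // /block_rel hp2.
  by have := S p q pq; rewrite wp wq.
by rewrite E; apply: sC.
Qed.
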